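(* Let $G=(V,E,H)$ be a HEDG and $X,Y,Z\subseteq V$. Let $A=\mathrm{Anc}^G(X\cup Y\cup Z)$ with its induced sub-HEDG structure and $A^{\mathrm{moral}}$ its moralization. Then $X\perp^d_G Y\mid Z$ if and only if $X$ is separated from $Y$ given $Z$ in the undirected graph $A^{\mathrm{moral}}$.
   Context: A HEDG is $G=(V,E,H)$: $V$ finite, $E\subseteq V\times V$ directed edges (self-loops allowed), $H$ a simplicial complex on $V$ (contains all singletons, closed under subsets); for distinct $v,w$, $v\leftrightarrow w$ means $\{v,w\}\in H$. $\mathrm{Pa}^G(v)=\{u:(u,v)\in E\}$; $\mathrm{Anc}^G(S)$ = nodes with a directed path into $S$ (including $S$). The induced sub-HEDG on $A$ is $(A,E\cap A^2,\{F\in H:F\subseteq A\})$. Moralization: undirected graph on the node set with $v - w$ ($v\ne w$) iff there exist nodes $v_1,\dots,v_n$ ($n\ge1$) with $v\in\{v_1\}\cup\mathrm{Pa}(v_1)$, $w\in\{v_n\}\cup\mathrm{Pa}(v_n)$ and $v_1\leftrightarrow v_2\leftrightarrow\cdots\leftrightarrow v_n$. A path is a sequence of nodes (repetitions allowed, $n\ge1$) with consecutive nodes joined by an edge $\to$, $\leftarrow$ or $\leftrightarrow$. It is $Z$-blocked if an endnode is in $Z$, or some intermediate node $v_i$ is a collider (both adjacent edges have an arrowhead at $v_i$) with $v_i\notin\mathrm{Anc}^G(Z)$, or some intermediate non-collider lies in $Z$. $X\perp^d_G Y\mid Z$ iff every path with one endnode in $X$ and the other in $Y$ is $Z$-blocked.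 In an undirected graph, $X$ is separated from $Y$ given $Z$ if every path with one endnode in $X$ and the other in $Y$ contains a node of $Z$. *)

(* Defs.v *)
From mathcomp Require Import all_boot.
Set Implicit Arguments. Unset Strict Implicit. Unset Printing Implicit Defensive.

(* A HEDG (V,E,H): V a finite type of nodes, E a (boolean) directed edge
   relation (self-loops allowed), H a simplicial complex on V. *)
Record HEDG (V : finType) := MkHEDG {
  hE : rel V;
  hH : {set {set V}};
  hH_single : forall v : V, [set v] \in hH;
  hH_closed : forall F F' : {set V}, F \in hH -> F' \subset F -> F' \in hH
}.

Section HEDGDefs.
Variables (V : finType) (G : HEDG V).

Definition bidir (v w : V) : bool := (v != w) && ([set v; w] \in hH G).

Definition Pa (v : V) : {set V} := [set u | hE G u v].

Definition Anc (S : {set V}) : {set V} :=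
  [set u | [exists s in S, connect (hE G) u s]].

(* kind of the edge between consecutive nodes a (earlier) and b (later) *)
Inductive ekind := Fwd | Bwd | Bi .

Definition edge_ok (k : ekind) (a b : V) : bool :=
  match k with
  | Fwd => hE G a b
  | Bwd => hE G b a
  | Bi => bidir a b
  end.

Definition head_at_later (k : ekind) : bool :=
  match k with Fwd | Bi => true | Bwd => false end.
Definition head_at_earlier (k : ekind) : bool :=
  match k with Bwd | Bi => true | Fwd => false end.

(* A path is a start node x0 together with a list of steps (edge kind, next
   node); its nodes are x0 :: map snd st (n = size st + 1 >= 1 nodes). *)
Definition pnode (x0 : V) (st : seq (ekind * V)) (i : nat) : V :=
  nth x0 (x0 :: map snd st) i.
Definition pkind (st : seq (ekind * V)) (i : nat) : ekind :=
  nth Fwd (map fst st) i.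
Definition plast (x0 : V) (st : seq (ekind * V)) : V := last x0 (map snd st).

Definition valid_path (x0 : V) (st : seq (ekind * V)) : Prop :=
  forall i, i < size st -> edge_ok (pkind st i) (pnode x0 st i) (pnode x0 st i.+1).

(* intermediate node i (0 < i < size st) is a collider *)
Definition collider (st : seq (ekind * V)) (i : nat) : bool :=
  head_at_later (pkind st i.-1) && head_at_earlier (pkind st i).

Definition Z_blocked (Z : {set V}) (x0 : V) (st : seq (ekind * V)) : Prop :=
  x0 \in Z \/ plast x0 st \in Z \/
  exists i, 0 < i < size st /\
    ((collider st i /\ pnode x0 st i \notin Anc Z) \/
     (~~ collider st i /\ pnode x0 st i \in Z)).

Definition dsep (X Y Z : {set V}) : Prop :=
  forall x0 st, valid_path x0 st ->
    (x0 \in X /\ plast x0 st \in Y) \/ (x0 \in Y /\ plast x0 st \in X) ->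
    Z_blocked Z x0 st.

(* In the induced sub-HEDG on A: edges E ∩ A^2, bidirected edges {v,w} ⊆ A
   in H.  v - w (v <> w) iff there are v1..vn in A with v ∈ {v1} ∪ Pa_A(v1),
   w ∈ {vn} ∪ Pa_A(vn) and v1 <-> v2 <-> ... <-> vn in A. *)
Definition bidirA (A : {set V}) (v w : V) : bool :=
  [&& v \in A, w \in A & bidir v w].

Definition moral_adj (A : {set V}) (v w : V) : Prop :=
  [/\ v != w, v \in A, w \in A &
   exists (v1 : V) (s : seq V),
     [/\ v1 \in A, all (fun u => u \in A) s, path (bidirA A) v1 s,
         (v == v1) || hE G v v1 &
         (w == last v1 s) || hE G w (last v1 s)]].

Definition moral_sep (A X Y Z : {set V}) : Prop :=
  forall (x0 : V) (s : seq V),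
    x0 \in A -> all (fun u => u \in A) s ->
    (forall i, i < size s -> moral_adj A (nth x0 (x0 :: s) i) (nth x0 (x0 :: s) i.+1)) ->
    (x0 \in X /\ last x0 s \in Y) \/ (x0 \in Y /\ last x0 s \in X) ->
    exists2 z, z \in x0 :: s & z \in Z.

End HEDGDefs.

(* Main.v *)
Require Import Defs.
From mathcomp Require Import all_boot.
From Stdlib Require Import Classical.
Set Implicit Arguments. Unset Strict Implicit. Unset Printing Implicit Defensive.

Section Aux.
Variables (V : finType) (G : HEDG V).
Implicit Types (x y : V) (st : seq (ekind * V)) (k : ekind) (Z C : {set V}).

Definition inter_ok (Z C : {set V}) (h : bool) (k : ekind) (x : V) : bool :=
  if h && head_at_earlier k then x \in C else x \notin Z.

Fixpoint conn (Z C : {set V}) (h : bool) (x : V) (st : seq (ekind * V)) : Prop :=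
  match st with
  | [::] => x \notin Z
  | (k, y) :: st' => [/\ edge_ok G k x y, inter_ok Z C h k x & conn Z C (head_at_later k) y st']
  end.

Definition hin_at (h : bool) (st : seq (ekind * V)) (i : nat) : bool :=
  if i is j.+1 then head_at_later (pkind st j) else h.

Lemma pnode_cons x k y st i : i <= size st -> pnode x ((k,y)::st) i.+1 = pnode y st i.
Proof. move=> hi. rewrite /pnode /=. apply: set_nth_default. by rewrite /= size_map ltnS. Qed.

Lemma hin_at_cons h k y st j : hin_at h ((k,y)::st) j.+1 = hin_at (head_at_later k) st j.
Proof. by case: j. Qed.

Lemma valid_cons x k y st : valid_path G x ((k,y)::st) <-> edge_ok G k x y /\ valid_path G y st.
Proof.
split.
- move=> hv; split; first exact: (hv 0).
  move=> i hi. have := hv i.+1 hi. rewrite /pkind /= -/(pkind st i).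
  by rewrite pnode_cons ?(ltnW hi) // pnode_cons.
- case=> he hv [|i] hi //. rewrite /pkind /= -/(pkind st i).
  have hi' : i < size st by [].
  rewrite pnode_cons; last exact: ltnW.
  by rewrite pnode_cons //; apply: hv.
Qed.

Lemma conn_idx Z C st : forall h x, conn Z C h x st <->
  [/\ valid_path G x st, plast x st \notin Z &
      forall i, i < size st -> inter_ok Z C (hin_at h st i) (pkind st i) (pnode x st i)].
Proof.
elim: st => [|[k y] st IH] h x /=.
  by split; [move=> hx; split => // i | case].
split.
- case=> he hi /IH [hv hl hin]. split => //.
  + by apply/valid_cons.
  + case=> [|i] hs //. rewrite hin_at_cons /pkind /= -/(pkind st i) pnode_cons.
      exact: hin.
    exact: ltnW.
- case=> /valid_cons [he hv] hl hin. split => //; first exact: (hin 0).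
  apply/IH; split => // i hi. have := hin i.+1 hi.
  by rewrite hin_at_cons /pkind /= -/(pkind st i) pnode_cons // ltnW.
Qed.

Lemma conn_notZ Z C st x : conn Z C false x st -> x \notin Z.
Proof. by case: st => [|[k y] st] //= [_ h _]. Qed.

Lemma conn_Zblocked Z x st :
  conn Z (Anc G Z) false x st <-> valid_path G x st /\ ~ Z_blocked G Z x st.
Proof.
split.
- move=> hc. have hx := conn_notZ hc. move/conn_idx: hc => [hv hl hin].
  split => //. case=> [hxZ|[hlZ|[i [/andP [hi0 hi] hb]]]].
  + by rewrite hxZ in hx.
  + by rewrite hlZ in hl.
  + have := hin i hi. case: i hi0 hi hb => // j _ hi hb.
    rewrite /inter_ok /= -/(collider st j.+1).
    by case: hb => [[-> /negbTE ->]|[/negbTE -> ->]].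
- case=> hv nb. apply/conn_idx; split => //.
  + by apply/negP => h; apply: nb; right; left.
  + case=> [|j] hj.
    * rewrite /inter_ok /=. by apply/negP => h; apply: nb; left.
    * rewrite /inter_ok /= -/(collider st j.+1).
      case hcol: (collider st j.+1).
      - apply/negPn/negP => h; apply: nb; right; right; exists j.+1; split => //.
        by left.
      - apply/negP => h; apply: nb; right; right; exists j.+1; split => //.
        by right; rewrite hcol.
Qed.
End Aux.

Section Aux2.
Variables (V : finType) (G : HEDG V).
Implicit Types (x y u v w : V) (st : seq (ekind * V)) (k : ekind) (Z C B S : {set V}).

Lemma Anc_par S u v : hE G u v -> v \in Anc G S -> u \in Anc G S.
Proof.
rewrite !inE => huv /existsP [s /andP [hs hc]]. apply/existsP; exists s.
by rewrite hs /= (connect_trans (connect1 huv) hc).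
Qed.

Lemma Anc_self S x : x \in S -> x \in Anc G S.
Proof. by move=> hx; rewrite inE; apply/existsP; exists x; rewrite hx connect0. Qed.

Lemma Anc_sub S S' x : S \subset S' -> x \in Anc G S -> x \in Anc G S'.
Proof.
move=> hs; rewrite !inE => /existsP [s /andP [h hc]]; apply/existsP; exists s.
by rewrite hc (subsetP hs).
Qed.

Lemma conn_inA Z C B : (forall x, x \in C -> x \in B) ->
  (forall u v, hE G u v -> v \in B -> u \in B) ->
  forall st h x, conn G Z C h x st -> plast x st \in B -> (h = false -> x \in B) ->
  x \in B /\ all (fun p => p.2 \in B) st.
Proof.
move=> hCB hpar; elim=> [|[k y] st IH] h x /=.
  by move=> _ hl _; split.
case=> he hi hc hl hx.
have hy : head_at_later k = false -> y \in B.
  move: he hi; case: (k) => //= he hi _. apply: (hpar _ _ he).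
  by case: h hx hi => [_ /hCB|->].
have [hyB hst] := IH _ _ hc hl hy. split; last by rewrite /= hyB.
case: h hx hi => [_|-> //]. move: he; case: (k) => /= he hi.
- exact: (hpar _ _ he).
- exact: hCB.
- exact: hCB.
Qed.

Fixpoint mpath B u m := match m with [::] => True | w :: m' => moral_adj G B u w /\ mpath B w m' end.
Definition Res B Z u e := exists m, [/\ mpath B u m, all (fun w => w \notin Z) m & last u m = e].

Lemma mpath_inA B u m : mpath B u m -> all (fun w => w \in B) m.
Proof. elim: m u => [|w m IH] u //= [[_ _ hw _] hm]. by rewrite hw (IH w). Qed.

Lemma mpath_nth B u m : mpath B u m <->
  forall i, i < size m -> moral_adj G B (nth u (u::m) i) (nth u (u::m) i.+1).
Proof.
elim: m u => [|w m IH] u /=.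
  by split => // _ [].
have E : forall i, i < size m -> nth u (w::m) i = nth w (w::m) i /\ nth u (w::m) i.+1 = nth w (w::m) i.+1.
  by move=> i hi; split; apply: set_nth_default => //=; apply: ltnW.
split.
- case=> h1 /IH h2 [|i] // hi.
  change (moral_adj G B (nth u (w::m) i) (nth u (w::m) i.+1)).
  have [-> ->] := E i hi. exact: h2.
- move=> h; split; first exact: (h 0).
  apply/IH => i hi. have := h i.+1 hi.
  change (moral_adj G B (nth u (w::m) i) (nth u (w::m) i.+1) -> moral_adj G B (nth w (w::m) i) (nth w (w::m) i.+1)).
  by have [-> ->] := E i hi.
Qed.

Lemma res_close B Z u v1 s w e : u \in B -> v1 \in B -> all (fun z => z \in B) s ->
  path (bidirA G B) v1 s -> (u == v1) || hE G u v1 ->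
  (w == last v1 s) || hE G w (last v1 s) -> w \in B -> w \notin Z ->
  Res B Z w e -> Res B Z u e.
Proof.
move=> hu hv1 hs hp huv hw hwB hwZ.
case: (eqVneq u w) => [-> //|neq]. case=> m [hm hz hl].
exists (w :: m); split => //=; last by rewrite hwZ.
split => //. split => //. by exists v1, s.
Qed.

Lemma claimC Z C B : forall st x h u v1 s, conn G Z C h x st -> x \in B ->
  all (fun p => p.2 \in B) st -> u \in B -> u \notin Z -> v1 \in B ->
  all (fun z => z \in B) s -> path (bidirA G B) v1 s -> last v1 s = x ->
  (u == v1) || hE G u v1 -> Res B Z u (plast x st).
Proof.
elim=> [|[k y] st IH] x h u v1 s /=.
  move=> hxZ hxB _ hu huZ hv1 hs hp hl huv.
  apply: (res_close (w:=x) hu hv1 hs hp huv) => //; first by rewrite hl eqxx.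
  by exists [::].
case=> he hi hc hxB /andP [hyB hst] hu huZ hv1 hs hp hl huv.
change (plast x ((k, y) :: st)) with (plast y st).
case: k he hi hc => /= he hi hc.
- have hxZ : x \notin Z by move: hi; rewrite /inter_ok andbF.
  apply: (res_close (w:=x) hu hv1 hs hp huv) => //; first by rewrite hl eqxx.
  apply: (IH y _ x y [::] hc) => //. by rewrite he orbT.
- have hyZ := conn_notZ hc.
  apply: (res_close (w:=y) hu hv1 hs hp huv) => //; first by rewrite hl he orbT.
  by apply: (IH y _ y y [::] hc) => //; rewrite eqxx.
- apply: (IH y _ u v1 (rcons s y) hc) => //.
  + by rewrite all_rcons hyB.
  + by rewrite rcons_path hp hl /bidirA hxB hyB he.
  + by rewrite last_rcons.
Qed.

End Aux2.

Section Dir1.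
Variables (V : finType) (G : HEDG V) (X Y Z : {set V}).
Implicit Types (x y u v w : V) (st : seq (ekind * V)) (k : ekind).
Local Notation A := (Anc G (X :|: Y :|: Z)).
Local Notation AZ := (Anc G Z).

Lemma chainW w e : w \in A -> w \notin Z ->
  (forall h, exists st, conn G Z A h w st /\ plast w st = e) ->
  forall s x h, x \in A -> h || (x \notin Z) -> all (fun z => z \in A) s ->
  path (bidirA G A) x s -> (w == last x s) || hE G w (last x s) ->
  exists st, conn G Z A h x st /\ plast x st = e.
Proof.
move=> hwA hwZ hK; elim=> [|y s IH] x h hx hh hs hp hw /=.
- move: hw => /= /orP [/eqP hwx | hwx]; first by rewrite -hwx; exact: hK.
  have [st [hc hl]] := hK false. exists ((Bwd, w) :: st). split => //=. split => //.
  by rewrite /inter_ok /= andbT; case: h hh.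
- move: hp hs => /= /andP [hb hp] /andP [hyA hs].
  have [st [hc hl]] := IH y true hyA isT hs hp hw.
  exists ((Bi, y) :: st). split => //=. split => //.
  + by move: hb; rewrite /bidirA => /and3P [].
  + by rewrite /inter_ok /= andbT; case: h hh.
Qed.

Lemma walkW : forall m u, u \in A -> u \notin Z -> mpath G A u m ->
  all (fun z => z \notin Z) m ->
  forall h, exists st, conn G Z A h u st /\ plast u st = last u m.
Proof.
elim=> [|w m IH] u hu huZ /= hm hz h.
  by exists [::].
case: hm => [[hneq _ hwA [v1 [s [hv1 hs hp huv hw]]]] hm'].
move/andP: hz => [hwZ hzm].
have hK := IH w hwA hwZ hm' hzm.
case/orP: huv => [/eqP hu1 | huv1].
- subst v1. have hh : h || (u \notin Z) by rewrite huZ orbT.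
  exact: (chainW hwA hwZ hK hu hh hs hp hw).
- have [st [hc hl]] := chainW hwA hwZ hK (h:=true) hv1 isT hs hp hw.
  exists ((Fwd, v1) :: st). split => //=. split => //.
  by rewrite /inter_ok andbF.
Qed.

Inductive reach : V -> bool -> Prop :=
| rs x : x \in X -> reach x false
| rst x h k y : reach x h -> edge_ok G k x y -> inter_ok Z AZ h k x -> reach y (head_at_later k).

Definition Goal := exists x0 st, [/\ x0 \in X, conn G Z AZ false x0 st & plast x0 st \in Y].

Lemma reach_sound y h : reach y h -> forall rest, conn G Z AZ h y rest ->
  exists x0 st, [/\ x0 \in X, conn G Z AZ false x0 st & plast x0 st = plast y rest].
Proof.
elim=> [x hx | x h' k y' r IH he hi] rest hc.
- by exists x, rest.
- have := IH ((k, y') :: rest). apply. by split.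
Qed.

Lemma reach_goal y h : reach y h -> y \in Y -> y \notin Z -> Goal.
Proof.
move=> r hY hZ. have [x0 [st [hx hc hl]]] := reach_sound r (rest:=[::]) hZ.
by exists x0, st; split => //; rewrite hl.
Qed.

Lemma Z_AZ x : x \notin AZ -> x \notin Z.
Proof. by apply: contra; apply: Anc_self. Qed.

Lemma notAZ_step u v : hE G u v -> u \notin AZ -> v \notin AZ.
Proof. move=> he; apply: contra; exact: Anc_par. Qed.

Lemma fwd_path : forall p x h, path (hE G) x p -> reach x h -> x \notin AZ ->
  exists h', reach (last x p) h' /\ last x p \notin AZ.
Proof.
elim=> [|x' p IH] x h /=.
  by move=> _ r hx; exists h.
move=> /andP [he hp] r hx. apply: (IH x' true hp).
- apply: (rst (k:=Fwd)) r he _. by rewrite /inter_ok andbF Z_AZ.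
- exact: notAZ_step he hx.
Qed.

Lemma bwd_path : forall p x, path (hE G) x p -> last x p \in X -> x \notin AZ -> reach x false.
Proof.
elim=> [|x' p IH] x /=.
  by move=> _ hl _; apply: rs.
move=> /andP [he hp] hl hx. have hx' := notAZ_step he hx.
have r' := IH x' hp hl hx'.
apply: (rst (k:=Bwd)) r' he _. by rewrite /inter_ok /= Z_AZ.
Qed.

Lemma reroute x h : reach x h -> x \in A -> x \notin AZ -> Goal \/ reach x false.
Proof.
move=> r; rewrite inE => /existsP [s /andP [hs hc]] hx.
have hsZ : s \notin Z.
  apply/negP => hsZ; move/negP: hx; apply; rewrite inE; apply/existsP; exists s.
  by rewrite hsZ.
move/connectP: hc => [p hp hl].
move: hs; rewrite !inE (negbTE hsZ) orbF => /orP [hsX|hsY].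
- right; apply: (bwd_path hp) => //; by rewrite -hl.
- left. have [h' [r' hl']] := fwd_path hp r hx.
  apply: (reach_goal r'); first by rewrite -hl.
  exact: Z_AZ.
Qed.

Lemma loop : forall st x hin, conn G Z A hin x st -> plast x st \in Y ->
  (reach x hin \/ (x \notin Z /\ reach x false)) -> Goal.
Proof.
elim=> [|[k y] st IH] x hin /=.
  by move=> hxZ hY [r | [_ r]]; apply: (reach_goal r).
case=> he hi hc hY hI.
have : Goal \/ (exists h, reach x h /\ inter_ok Z AZ h k x).
  case: hI => [r | [hxZ r]].
  - case hcol: (hin && head_at_earlier k).
    + case hxAZ: (x \in AZ).
      * by right; exists hin; rewrite /inter_ok hcol.
      * have hxA : x \in A by move: hi; rewrite /inter_ok hcol.
        have [g|r'] := reroute r hxA (negbT hxAZ); first by left.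
        right; exists false; split => //. by rewrite /inter_ok /= Z_AZ ?hxAZ.
    + right; exists hin; split => //. by move: hi; rewrite /inter_ok hcol.
  - by right; exists false; rewrite /inter_ok /= hxZ.
case=> [//|[h [r hok]]].
apply: (IH y (head_at_later k) hc hY). left. exact: rst r he hok.
Qed.

Lemma dir1 : dsep G X Y Z -> forall x0 s, x0 \in A -> mpath G A x0 s ->
  all (fun z => z \notin Z) (x0 :: s) -> x0 \in X -> last x0 s \in Y -> False.
Proof.
move=> hd x0 s hx0 hm /andP [hx0Z hz] hX hY.
have [st [hc hl]] := walkW hx0 hx0Z hm hz false.
have [x' [st' [hx' hc' hY']]] := loop hc (etrans (f_equal (fun v => v \in Y) hl) hY) (or_introl (rs hX)).
have [hv nb] := (conn_Zblocked G Z x' st').1 hc'.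
exact: nb (hd x' st' hv (or_introl (conj hx' hY'))).
Qed.

Lemma dir2 : moral_sep G A X Y Z -> dsep G X Y Z.
Proof.
move=> hm x0 st hv hxy. case: (classic (Z_blocked G Z x0 st)) => // nb. exfalso.
have hc : conn G Z AZ false x0 st by apply/conn_Zblocked.
have hXYA : forall v, (v \in X) || (v \in Y) -> v \in A.
  by move=> v hv'; apply: Anc_self; rewrite !inE hv'.
have [hx0A hlA] : x0 \in A /\ plast x0 st \in A.
  by case: hxy => [[h1 h2]|[h1 h2]]; split; apply: hXYA; rewrite ?h1 ?h2 ?orbT.
have hpar : forall u v, hE G u v -> v \in A -> u \in A by move=> u v; apply: Anc_par.
have hsub : forall v, v \in AZ -> v \in A.
  by move=> v; apply: Anc_sub; rewrite subsetUr.
have [hxA hstA] := conn_inA hsub hpar hc hlA (fun _ => hx0A).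
have hx0Z := conn_notZ hc.
have [m [hmp hmz hml]] := claimC hc hxA hstA hxA hx0Z hxA (isT : all _ [::])
   (isT : path _ _ [::]) (erefl _) (introT orP (or_introl (eqxx x0))).
have := hm x0 m hxA (mpath_inA hmp) ((mpath_nth G A x0 m).1 hmp).
rewrite hml => /(_ hxy) [z]. rewrite inE => /orP [/eqP ->|hz] hzZ.
- by rewrite hzZ in hx0Z.
- by move/allP: hmz => /(_ z hz); rewrite hzZ.
Qed.

End Dir1.

Lemma dsep_sym (V : finType) (G : HEDG V) X Y Z : dsep G X Y Z -> dsep G Y X Z.
Proof. move=> hd x0 st hv h; apply: hd => //; tauto. Qed.

Unset Implicit Arguments. Set Strict Implicit.
Theorem mainTheorem4 (V : finType) (G : HEDG V) (X Y Z : {set V}) :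
  dsep G X Y Z <-> moral_sep G (Anc G (X :|: Y :|: Z)) X Y Z.
Proof.
split; last exact: dir2.
move=> hd x0 s hx0 hs hadj hxy.
case: (boolP (has (fun z => z \in Z) (x0 :: s))) => [/hasP [z hz hzZ] | hn].
  by exists z.
exfalso.
have hz : all (fun z => z \notin Z) (x0 :: s).
  apply/allP => z hz; apply/negP => hzZ; move/negP: hn; apply; apply/hasP; by exists z.
have hm := (mpath_nth G _ x0 s).2 hadj.
case: hxy => [[hX hY]|[hY hX]].
- exact: (dir1 hd hx0 hm hz hX hY).
- have E : Y :|: X :|: Z = X :|: Y :|: Z by rewrite (setUC Y X).
  rewrite -E in hx0 hm.
  exact: (dir1 (dsep_sym hd) hx0 hm hz hY hX).
Qed.
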